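(* There is a closed subgroup $G$ of $\mathbb Z^\omega$ such that for every closed subgroup $H$ of $\mathbb Z^\omega$ there is a continuous group homomorphism $\varphi:\mathbb Z^\omega\to\mathbb Z^\omega$ with $\varphi^{-1}(G)=H$.
   Context: $\mathbb Z$ carries the discrete topology and $\mathbb Z^\omega$ the product topology. *)

(* Defs.v *)
From HB Require Import structures.
From mathcomp Require Import all_boot all_order all_algebra.
From mathcomp Require Import all_classical all_reals all_analysis.
Set Implicit Arguments. Unset Strict Implicit. Unset Printing Implicit Defensive.
Import Order.TTheory GRing.Theory Num.Theory.
Local Open Scope classical_set_scope.
Local Open Scope ring_scope.

Notation Zd := (discrete_topology int).

Notation Zomega := {ptws nat -> Zd}.

Definition zadd (x y : Zomega) : Zomega := fun n => ((x n : int) + (y n : int))%R.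
Definition zopp (x : Zomega) : Zomega := fun n => (- (x n : int))%R.
Definition zzero : Zomega := fun _ => (0 : int).

Definition is_subgroup (H : set Zomega) : Prop :=
  H zzero /\ (forall x y, H x -> H y -> H (zadd x y)) /\ (forall x, H x -> H (zopp x)).

Definition closed_subgroup (H : set Zomega) : Prop := is_subgroup H /\ closed H.

Definition group_hom (f : Zomega -> Zomega) : Prop :=
  forall x y, f (zadd x y) = zadd (f x) (f y).

(* Main.v *)
Require Import Defs.
From HB Require Import structures.
From mathcomp Require Import all_boot all_order all_algebra.
From mathcomp Require Import all_classical all_reals all_analysis.
Import Order.TTheory GRing.Theory Num.Theory.
Local Open Scope classical_set_scope.
Local Open Scope ring_scope.

Definition subgrp (K : set (nat -> int)) :=
  K (fun _ => 0) /\ (forall x y, K x -> K y -> K (fun n => x n + y n)) /\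
  (forall x, K x -> K (fun n => - x n)).

Lemma subgrp_scal K v (z : int) : subgrp K -> K v -> K (fun i => z * v i).
Proof.
move=> [K0 [KD KN]] Kv.
have Hn : forall m : nat, K (fun i => m%:Z * v i).
  elim=> [|m IH].
    by rewrite (_ : (fun i => _) = (fun _ => 0)) //; apply: funext => i; rewrite mul0r.
  rewrite (_ : (fun i => _) = (fun i => v i + m%:Z * v i)); first exact: KD.
  by apply: funext => i; rewrite -addn1 PoszD mulrDl mul1r addrC.
case: z => m; first exact: Hn.
rewrite (_ : (fun i => _) = (fun i => - ((m.+1)%:Z * v i))); first exact: KN.
by apply: funext => i; rewrite NegzE mulNr.
Qed.

Definition comb (L : seq (nat -> int)) (c : nat -> int) (i : nat) : int :=
  \sum_(k < size L) c k * nth (fun _ => 0) L k i.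

Lemma comb_cons v L c i : comb (v :: L) c i = c 0%N * v i + comb L (fun k => c k.+1) i.
Proof. by rewrite /comb /= big_ord_recl. Qed.

Lemma subgrp_comb K L c : subgrp K -> (forall v, v \in L -> K v) -> K (comb L c).
Proof.
move=> sK; elim: L c => [|v L IH] c HL.
  rewrite (_ : comb _ _ = (fun _ => 0)); first by case: sK.
  by apply: funext => i; rewrite /comb big_ord0.
rewrite (_ : comb _ _ = (fun i => c 0%N * v i + comb L (fun k => c k.+1) i)); last first.
  by apply: funext => i; rewrite comb_cons.
case: (sK) => _ [KD _]; apply: KD.
  by apply: subgrp_scal => //; apply: HL; rewrite inE eqxx.
by apply: IH => w wL; apply: HL; rewrite inE wL orbT.
Qed.

(* principal-ness of subgroups of Z, in the form we need *)
Lemma subgrp_principal K (n : nat) : subgrp K ->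
  exists w, K w /\ forall x, K x -> exists m : int, x n = m * w n.
Proof.
move=> sK; case: (sK) => [K0 [KD KN]].
case: (pselect (exists x, K x /\ x n != 0)) => [[x0 [Kx0 x0n]]|none]; last first.
  exists (fun _ => 0); split => // x Kx; exists 0; rewrite mul0r.
  by case: (eqVneq (x n) 0) => // h; exfalso; apply: none; exists x.
have [p [Kp pn]] : exists p, K p /\ (0 < p n).
  case: (ltrgtP 0 (x0 n)) => h; first by exists x0.
    by exists (fun i => - x0 i); split; [exact: KN | rewrite oppr_gt0].
  by move: x0n; rewrite -h eqxx.
pose P := fun k : nat => `[< exists y, K y /\ y n = k%:Z /\ (0 < k)%N >].
have exP : exists k, P k.
  exists `|p n|%N; apply/asboolP; exists p; split => //; split.
    by rewrite gez0_abs // ltW.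
  by rewrite -ltz_nat gez0_abs // ltW.
case: (ex_minnP exP) => d /asboolP [w [Kw [wn d0]]] dmin.
exists w; split => // x Kx.
exists (x n %/ d%:Z)%Z.
have e := divz_eq (x n) d%:Z.
set q := (x n %/ d%:Z)%Z in e *; set r := (x n %% d%:Z)%Z in e.
have dn0 : d%:Z != 0 by rewrite eqz_nat -lt0n.
have r0 : 0 <= r by rewrite modz_ge0.
have rd : r < d%:Z.
  by have := ltz_mod (x n) dn0.
suff : r = 0 by move=> r00; rewrite e r00 addr0 wn.
apply: contrapT => rn0.
pose y := fun i => x i + - (q * w i).
have Ky : K y by apply: KD => //; apply: KN; apply: subgrp_scal.
have yn : y n = r by rewrite /y wn e addrAC subrr add0r.
have := dmin `|r|%N; rewrite (_ : P `|r|%N); last first.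
  apply/asboolP; exists y; split => //; split; first by rewrite gez0_abs.
  by rewrite -ltz_nat gez0_abs // lt_neqAle eq_sym r0 andbT; apply/eqP.
move=> /(_ isT); rewrite -lez_nat gez0_abs //.
by move=> h; move: (lt_le_trans rd h); rewrite ltxx.
Qed.

Lemma fg K (n : nat) : subgrp K -> exists L : seq (nat -> int),
  (forall v, v \in L -> K v) /\
  forall x, K x -> exists c, forall i, (i < n)%N -> x i = comb L c i.
Proof.
move=> sK; elim: n => [|n [L [LK Lsp]]].
  by exists [::]; split => // x _; exists (fun _ => 0) => i.
pose K0 := fun x : nat -> int => K x /\ forall i, (i < n)%N -> x i = 0.
have sK0 : subgrp K0.
  case: (sK) => [Kz [KD KN]]; split; first by split.
  split; first by move=> x y [Kx x0] [Ky y0]; split; [exact: KD | move=> i lin; rewrite x0 // y0 // addr0].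
  by move=> x [Kx x0]; split; [exact: KN | move=> i lin; rewrite x0 // oppr0].
have [w [[Kw w0] wP]] := @subgrp_principal K0 n sK0.
exists (w :: L); split.
  by move=> v; rewrite inE => /orP [/eqP -> //|]; exact: LK.
move=> x Kx; have [c cP] := Lsp x Kx.
pose y := fun i => x i + - comb L c i.
have K0y : K0 y.
  case: (sK) => [Kz [KD KN]]; split.
    by apply: KD => //; apply: KN; apply: subgrp_comb.
  by move=> i lin; rewrite /y cP // subrr.
have [m ym] := wP y K0y.
exists (fun k => if k is k'.+1 then c k' else m) => i; rewrite ltnS leq_eqVlt.
rewrite comb_cons /=.
case/orP => [/eqP ->|lin].
  by rewrite -ym /y addrNK.
by rewrite w0 // mulr0 add0r cP.
Qed.

Definition combS (L : seq (seq int)) (c : nat -> int) (i : nat) : int :=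
  \sum_(k < size L) c k * nth 0 (nth [::] L k) i.
Definition inspan (n : nat) (L : seq (seq int)) (y : nat -> int) :=
  exists c, forall i, (i < n)%N -> y i = combS L c i.
Definition trunc (n : nat) (L : seq (nat -> int)) : seq (seq int) :=
  [seq mkseq v n | v <- L].

Lemma combS_trunc n L c i : (i < n)%N -> combS (trunc n L) c i = comb L c i.
Proof.
move=> lin; rewrite /combS /comb size_map; apply: eq_bigr => k _.
by rewrite (nth_map (fun _ => 0)) // nth_mkseq.
Qed.

Lemma combS0 L i : combS L (fun _ => 0) i = 0.
Proof. by rewrite /combS big1 // => k _; rewrite mul0r. Qed.

Lemma combSD L c1 c2 i : combS L (fun k => c1 k + c2 k) i = combS L c1 i + combS L c2 i.
Proof. by rewrite /combS -big_split; apply: eq_bigr => k _; rewrite mulrDl. Qed.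

Lemma combSN L c i : combS L (fun k => - c k) i = - combS L c i.
Proof. by rewrite /combS -sumrN; apply: eq_bigr => k _; rewrite mulNr. Qed.

Definition J := (nat * seq (seq int))%type.
Definition jof (b : nat) : J := odflt (0%N, [::]) (unpickle b).
Definition dec (m : nat) : nat * nat := odflt (0%N, 0%N) (unpickle m).
Definition enc (b i : nat) : nat := pickle (b, i).

Definition Gu : set Zomega :=
  [set z | forall b, inspan (jof b).1 (jof b).2 (fun i => (z (enc b i) : int))].

Definition Phi (T : nat -> seq (seq int)) (x : Zomega) : Zomega :=
  fun m => if (jof (dec m).1).2 == T (jof (dec m).1).1 then x (dec m).2 else (0 : int).

Lemma PhiE T x b i : Phi T x (enc b i) =
  if (jof b).2 == T (jof b).1 then x i else (0 : int).
Proof. by rewrite /Phi /dec /enc pickleK. Qed.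

Lemma jofE j : jof (pickle j) = j.
Proof. by rewrite /jof pickleK. Qed.

Lemma coord_nbhs (x : Zomega) (n : nat) : nbhs x [set y : Zomega | y n = x n].
Proof. have := @proj_continuous nat (fun _ => Zd) n x [set x n] (discrete_set1 _). exact. Qed.

Lemma basic_nbhs (x : Zomega) (f : nat -> nat) n :
  nbhs x [set y : Zomega | forall i, (i < n)%N -> y (f i) = x (f i)].
Proof.
elim: n => [|n IH]; first by apply: (filterS _ filterT) => y _ i.
apply: (filterS _ (filterI IH (coord_nbhs x (f n)))) => y [h1 h2] i.
by rewrite ltnS leq_eqVlt => /orP [/eqP -> //|]; exact: h1.
Qed.

Lemma Gu_closed_subgroup : closed_subgroup Gu.
Proof.
split; first split.
- by move=> b; exists (fun _ => 0) => i _; rewrite combS0.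
- split.
  + move=> x y Gx Gy b; have [c1 h1] := Gx b; have [c2 h2] := Gy b.
    by exists (fun k => c1 k + c2 k) => i lin; rewrite combSD /zadd -h1 // -h2.
  + move=> x Gx b; have [c h] := Gx b.
    by exists (fun k => - c k) => i lin; rewrite combSN /zopp -h.
- move=> x clx b.
  have [y [Gy By]] := clx _ (basic_nbhs x (enc b) (jof b).1).
  have [c cP] := Gy b; exists c => i lin; rewrite -cP //; exact: (esym (By i lin)).
Qed.


Lemma ite_cont (b : bool) (i : nat) :
  continuous (fun y : Zomega => (if b then y i else (0:int)) : Zd).
Proof. case: b; [exact: proj_continuous | exact: cst_continuous]. Qed.
Lemma Phi_coord T m : continuous (fun y : Zomega => (Phi T y m : Zd)).
Proof.
exact: ite_cont.
Qed.
Lemma Phi_cont T : continuous (Phi T).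
Proof.
move=> x.
have FF := fmap_filter (Phi T) (nbhs_filter x).
have h := (@pointwise_cvgP nat Zd _ (Phi T x) FF).2 (fun t => Phi_coord T t x).
exact h.
Qed.

Lemma seq_cvg (u : nat -> Zomega) (x : Zomega) :
  (forall t n, (t < n)%N -> u n t = x t) -> u @ \oo --> x.
Proof.
move=> ux.
have FF := fmap_filter u (@eventually_filter).
have ct : forall t, (fun g : Zomega => (g t : Zd)) @ (u @ \oo) --> (x t : Zd).
  move=> t.
  have FF2 := fmap_filter (fun g : Zomega => (g t : Zd)) FF.
  apply/(discrete_cvg _ _ FF2).
  exists t.+1 => // n /= tn; exact: ux.
have h := (@pointwise_cvgP nat Zd _ x FF).2 ct.
exact h.
Qed.

Lemma Phi_good T (x : Zomega) b :
  ((jof b).2 = T (jof b).1 -> inspan (jof b).1 (T (jof b).1) (fun i => x i)) ->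
  inspan (jof b).1 (jof b).2 (fun i => (Phi T x (enc b i) : int)).
Proof.
move=> h; have [e|ne] := eqVneq (jof b).2 (T (jof b).1).
  have [c cP] := h e; exists c => i lin; rewrite PhiE -e eqxx e; exact: cP.
by exists (fun _ => 0) => i lin; rewrite PhiE (negbTE ne) combS0.
Qed.

Theorem mainTheorem7 :
  exists G : set Zomega, closed_subgroup G /\
    forall H : set Zomega, closed_subgroup H ->
      exists phi : Zomega -> Zomega,
        group_hom phi /\ continuous phi /\ phi @^-1` G = H.
Proof.
exists Gu; split; first exact: Gu_closed_subgroup.
move=> H [sH0 clH].
have sH : subgrp H by exact: sH0.
have [LH LHP] := choice (fun n => @fg H n sH).
pose T := fun n => trunc n (LH n).
exists (Phi T); split; [|split].
- move=> x y; apply: funext => m; rewrite /Phi /zadd.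
  by case: ifP => _ //; rewrite addr0.
- exact: Phi_cont.
- rewrite eqEsubset; split.
  + move=> x Gx.
    have hn : forall n, exists c, forall i, (i < n)%N -> x i = comb (LH n) c i.
      move=> n; have := Gx (pickle (n, T n)); rewrite /inspan jofE /=.
      move=> [c cP]; exists c => i lin.
      by rewrite -(@combS_trunc n (LH n) c i lin) -cP // PhiE jofE /= eqxx.
    have [cn cnP] := choice hn.
    pose u := fun n => (comb (LH n) (cn n) : Zomega).
    have uH : forall n, H (u n).
      move=> n; apply: subgrp_comb => //; exact: (LHP n).1.
    have uc : u @ \oo --> x.
      apply: seq_cvg => t n tn; by rewrite /u -cnP.
    have := @closed_cvg nat Zomega \oo _ u H clH.
    move=> /(_ eventually_filter) /(_ (nearW _ uH)); apply; exact: uc.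
  + move=> x Hx b; apply: Phi_good => e.
    have [c cP] := (LHP (jof b).1).2 x Hx.
    by exists c => i lin; rewrite combS_trunc // cP.
Qed.
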